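(* Let $n\ge 2$ and let $f:\{0,1\}^n\to\{0,1\}$ be written in the form $f(x_1,\dots,x_n)=\bigoplus_{I\subseteq\{1,\dots,n\}} a_I\bigwedge_{i\in I}x_i$ with $a_I\in\{0,1\}$. Let $\mathcal J=\{I\subseteq\{1,\dots,n\}: a_I=1,\ |I|\ge 2\}$ and suppose $n_{\mathcal J}=1$. Then the number $N^{scratch}_{comm}$ of one-way communication channels needed to simulate the full-correlation box associated to $f$ from scratch is $$N^{scratch}_{comm}=\Big|\bigcup_{I\in\mathcal J} I\Big|-1.$$
   Context: The full-correlation box associated to a Boolean function $f$ of $n$ inputs is the $n$-partite box with binary inputs $\vec x=(x_1,\dots,x_n)$ and binary outputs $\vec a=(a_1,\dots,a_n)$ given by $P(\vec a\mid\vec x)=2^{-(n-1)}$ if $\bigoplus_i a_i=f(\vec x)$ and $0$ otherwise. $n_{\mathcal J}$ denotes the maximal number of blocks in a partition $\{J_1,\dots,J_{n_{\mathcal J}}\}$ of $\mathcal J$ such that $A\cap B=\emptyset$ whenever $A\in J_i$, $B\in J_j$, $i\ne j$ (so $n_{\mathcal J}=1$ means the sets in $\mathcal J$ are connected under the relation of having nonempty intersection). Simulating a box from scratch means that the $n$ parties, using only shared randomness, local operations, and a set of one-way classical communication channels (each an ordered pair of parties, usable arbitrarily often), produce outputs with exactly the box's conditional distribution; $N^{scratch}_{comm}$ is the number of such channels required. *)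

(* Defs.v *)
From HB Require Import structures.
From mathcomp Require Import all_boot all_order all_algebra.
From mathcomp Require Import reals.
Set Implicit Arguments. Unset Strict Implicit. Unset Printing Implicit Defensive.
Import Order.TTheory GRing.Theory Num.Theory.
Local Open Scope ring_scope.

(* Parties are 'I_n; input/output strings are {ffun 'I_n -> bool}. *)
Notation bits n := {ffun 'I_n -> bool}.

Definition anf n (c : {set 'I_n} -> bool) (x : bits n) : bool :=
  \big[xorb/false]_(I : {set 'I_n} | c I) [forall i in I, x i].

Definition fc_box (R : realType) n (g : bits n -> bool) (a x : bits n) : R :=
  if (\big[xorb/false]_(i < n) a i) == g x then (2 ^+ n.-1)^-1 else 0.

Definition channel_set n (C : {set 'I_n * 'I_n}) : Prop :=
  forall p, p \in C -> p.1 != p.2.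

Definition reaches n (C : {set 'I_n * 'I_n}) (j i : 'I_n) : bool :=
  connect (fun u v => (u, v) \in C) j i.

Notation strategy n := {ffun 'I_n -> {ffun bits n -> bool}}.

Definition implementable n (C : {set 'I_n * 'I_n}) (s : strategy n) : Prop :=
  forall (i : 'I_n) (x y : bits n),
    (forall j, reaches C j i -> x j = y j) -> s i x = s i y.

(* Simulation from scratch: shared randomness = a probability distribution w
   over implementable deterministic strategies (local randomness absorbed). *)
Definition simulates (R : realType) n (C : {set 'I_n * 'I_n})
    (P : bits n -> bits n -> R) : Prop :=
  exists w : strategy n -> R,
    (forall s, 0 <= w s) /\ (\sum_s w s = 1) /\
    (forall s, w s != 0 -> implementable C s) /\
    (forall a x : bits n,
        \sum_s w s * (if [forall i, s i x == a i] then 1 else 0) = P a x).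

Definition N_scratch_comm_eq (R : realType) n (P : bits n -> bits n -> R)
    (k : nat) : Prop :=
  (exists C, channel_set C /\ #|C| = k /\ simulates C P) /\
  (forall C, channel_set C -> simulates C P -> (k <= #|C|)%N).

Definition Jfam n (c : {set 'I_n} -> bool) : {set {set 'I_n}} :=
  [set I | c I && (1 < #|I|)%N].

Definition blocks_separated n (P : {set {set {set 'I_n}}}) : bool :=
  [forall B1 in P, forall B2 in P, (B1 != B2) ==>
     [forall A in B1, forall B in B2, [disjoint A & B]]].

Definition nJ n (J : {set {set 'I_n}}) : nat :=
  \max_(P : {set {set {set 'I_n}}} | partition P J && blocks_separated P) #|P|.

(* Main.v *)
Require Import Defs.
From HB Require Import structures.
From mathcomp Require Import all_boot all_order all_algebra.
From mathcomp Require Import reals.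
Set Implicit Arguments. Unset Strict Implicit. Unset Printing Implicit Defensive.
Import Order.TTheory GRing.Theory Num.Theory.
Local Open Scope ring_scope.


Definition ucr n (C : {set 'I_n * 'I_n}) : rel 'I_n :=
  fun u v => ((u, v) \in C) || ((v, u) \in C).

Lemma ucr_sym n (C : {set 'I_n * 'I_n}) : symmetric (ucr C).
Proof. by move=> u v; rewrite /ucr orbC. Qed.

Section Graph.
Variables (n : nat) (C : {set 'I_n * 'I_n}).
Definition ev (j : 'I_n) : 'rV[rat]_n := delta_mx 0 j.
Definition Emx : 'M[rat]_(#|C|, n) :=
  \matrix_(i < #|C|) (ev (enum_val i).1 - ev (enum_val i).2).

Lemma edge_sub p : p \in C -> (ev p.1 - ev p.2 <= Emx)%MS.
Proof.
move=> Hp; have := row_sub (enum_rank_in Hp p) Emx.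
by rewrite rowK enum_rankK_in.
Qed.

Lemma conn_sub u v : connect (ucr C) u v -> (ev u - ev v <= Emx)%MS.
Proof.
case/connectP=> p; elim: p u => [|y p IH] u /=.
  by move=> _ ->; rewrite subrr sub0mx.
case/andP=> uy pp vl.
have -> : ev u - ev v = (ev u - ev y) + (ev y - ev v).
  by rewrite addrA subrK.
apply: addmx_sub; last exact: IH.
case/orP: uy => H; first exact: (edge_sub H).
have -> : ev u - ev y = (-1) *: (ev y - ev u).
  by rewrite scaleN1r opprB.
by apply: scalemx_sub; exact: (edge_sub H).
Qed.

Lemma card_conn_bound (X : {set 'I_n}) :
  {in X &, forall u v, connect (ucr C) u v} -> (#|X| <= #|C|.+1)%N.
Proof.
move=> HX.
case: (set_0Vmem X) => [->|[x0 Hx0]]; first by rewrite cards0.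
pose M : 'M[rat]_(#|X|, n) := \matrix_(i < #|X|) ev (enum_val i).
have rfM : row_free M.
  apply/row_freeP; exists (\matrix_(j, i) (enum_val i == j)%:R).
  apply/matrixP => i i'; rewrite !mxE.
  rewrite (bigD1 (enum_val i)) //= big1 ?addr0.
    rewrite !mxE /= (@eqxx _ (enum_val i)) mul1r; congr (_%:R).
    by rewrite (inj_eq enum_val_inj) eq_sym.
  move=> j nj; rewrite !mxE /=.
  by rewrite (negbTE nj) mul0r.
have sMN : (M <= Emx + ev x0)%MS.
  apply/row_subP => k; rewrite rowK.
  have Hi : enum_val k \in X by apply: enum_valP.
  have -> : ev (enum_val k) = (ev (enum_val k) - ev x0) + ev x0.
    by rewrite subrK.
  apply: addmx_sub; last exact: addsmxSr.
  apply: submx_trans (addsmxSl _ _).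
  exact: conn_sub (HX _ _ Hi Hx0).
have := mxrankS sMN.
rewrite (eqP rfM) => H1.
apply: leq_trans H1 _.
apply: leq_trans (mxrank_adds_leqif _ _) _.
by rewrite -(addn1 #|C|); apply: leq_add; apply: rank_leq_row.
Qed.
End Graph.


Lemma xorbE (I : Type) (r : seq I) (P : pred I) (F : I -> bool) :
  \big[xorb/false]_(i <- r | P i) F i = \big[addb/false]_(i <- r | P i) F i.
Proof.
by apply: (big_rec2 (fun a b => a = b)) => // i y1 y2 _ ->; case: (F i); case: y2.
Qed.

Definition mono n (K : {set 'I_n}) (x : bits n) : bool := [forall k in K, x k].

Lemma anfE n (c : {set 'I_n} -> bool) x :
  anf c x = \big[addb/false]_(K | c K) mono K x.
Proof. by rewrite /anf xorbE. Qed.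

Definition Dsum n (I : {set 'I_n}) (h : bits n -> bool) : bool :=
  \big[addb/false]_(x : bits n | [forall k, x k ==> (k \in I)]) h x.

Definition flip n (j : 'I_n) (x : bits n) : bits n :=
  [ffun k => if k == j then ~~ x k else x k].

Lemma flipK n (j : 'I_n) : involutive (flip j).
Proof.
move=> x; apply/ffunP => k; rewrite !ffunE.
by case: (k == j) => //; rewrite negbK.
Qed.

Lemma Dsum_zero n (I R : {set 'I_n}) (h : bits n -> bool) j :
  j \in I -> j \notin R ->
  (forall x y : bits n, (forall k, k \in R -> x k = y k) -> h x = h y) ->
  Dsum I h = false.
Proof.
move=> jI jR hR; rewrite /Dsum (bigID (fun x : bits n => x j)) /=.
rewrite [X in addb _ X](reindex_inj (can_inj (flipK j))) /=.
set S := (X in addb X _).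
suff -> : \big[addb/false]_(x | [forall k, flip j x k ==> (k \in I)] &&
             ~~ flip j x j) h (flip j x) = S by rewrite addbb.
apply: eq_big => x.
  rewrite ffunE eqxx negbK; congr (_ && _).
  apply: eq_forallb => k; rewrite ffunE.
  by case: eqP => [->|]; rewrite ?jI ?implybT.
move=> _; apply: hR => k kR; rewrite ffunE.
by case: eqP => // kj; rewrite -kj kR in jR.
Qed.

Lemma Dsum_mono n (I K : {set 'I_n}) : Dsum I (mono K) = (K == I).
Proof.
case: eqP => [->|nKI].
  rewrite /Dsum (bigD1 [ffun k => k \in I]) /=; last first.
    by apply/forallP => k; rewrite ffunE implybb.
  rewrite big1 ?addbF.
    by apply/forallP => k; apply/implyP; rewrite ffunE.
  move=> x /andP [/forallP Hx nx]; apply/negbTE/negP => /forallP Hm.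
  case/eqP: nx; apply/ffunP => k; rewrite ffunE.
  case kI: (k \in I); first by have := Hm k; rewrite kI.
  by have := Hx k; rewrite kI implybF => /negbTE.
case: (boolP (K \subset I)) => KI.
  have : ~~ (I \subset K) by apply/negP => IK; apply: nKI; apply/eqP; rewrite eqEsubset KI.
  case/subsetPn => j jI jK.
  apply: (Dsum_zero jI jK) => x y H; apply: eq_forallb => k.
  by case: (boolP (k \in K)) => // kK; rewrite H.
case/subsetPn: KI => k kK kI.
rewrite /Dsum big1 // => x /forallP Hx; apply/negbTE/forallP => Hm.
have := Hm k; rewrite kK /= => xk.
by have := Hx k; rewrite xk (negbTE kI).
Qed.

Lemma Dsum_anf n (c : {set 'I_n} -> bool) I :
  Dsum I (anf c) = c I.
Proof.
rewrite /Dsum.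
under eq_bigr => x _ do rewrite anfE.
rewrite exchange_big /=.
under eq_bigr => K _ do rewrite -/(Dsum I (mono K)) Dsum_mono.
case cI: (c I).
  rewrite (bigD1 I) //= eqxx big1 // => K /andP [_ /negbTE] //.
by rewrite big1 // => K cK; apply/negbTE; apply: contraTneq cK => ->; rewrite cI.
Qed.


Lemma sim_support (R : realType) n (C : {set 'I_n * 'I_n}) (g : bits n -> bool) :
  simulates C (fc_box R g) ->
  exists s : strategy n, implementable C s /\
    forall x, \big[addb/false]_(i < n) s i x = g x.
Proof.
case=> w [w0 [w1 [wimp wP]]].
have [s ws] : exists s, w s != 0.
  apply/existsP; apply: contraT; rewrite negb_exists => /forallP H.
  move: w1; rewrite big1 => [/eqP|s _]; first by rewrite eq_sym oner_eq0.
  by have := H s; rewrite negbK => /eqP.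
exists s; split; first exact: wimp.
move=> x; pose a : bits n := [ffun i => s i x].
have := wP a x; rewrite /fc_box xorbE.
have -> : \big[addb/false]_(i < n) a i = \big[addb/false]_(i < n) s i x.
  by apply: eq_bigr => i _; rewrite ffunE.
case: eqP => // _ H0; exfalso.
have ws0 : 0 < w s by rewrite lt0r ws w0.
have : w s <= \sum_s0 w s0 * (if [forall i, s0 i x == a i] then 1 else 0).
  rewrite (bigD1 s) //= ifT ?mulr1; last by apply/forallP => i; rewrite ffunE.
  rewrite lerDl; apply: sumr_ge0 => s0 _; apply: mulr_ge0 => //.
  by case: ifP.
by rewrite H0 => /(lt_le_trans ws0); rewrite ltxx.
Qed.

Lemma mono_in_reach n (C : {set 'I_n * 'I_n}) (c : {set 'I_n} -> bool)
  (s : strategy n) I :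
  implementable C s -> (forall x, \big[addb/false]_(i < n) s i x = anf c x) ->
  c I -> exists i, I \subset [set j | reaches C j i].
Proof.
move=> Himp Hs cI; apply/existsP; apply: contraT; rewrite negb_exists => /forallP H.
have : Dsum I (anf c) = false.
  rewrite /Dsum; under eq_bigr => x _ do rewrite -Hs.
  rewrite exchange_big big1 //= => i _.
  have := H i; case/subsetPn => j jI; rewrite inE => jR.
  apply: (Dsum_zero (R := [set j | reaches C j i]) jI); first by rewrite inE.
  by move=> x y Hxy; apply: Himp => k Hk; apply: Hxy; rewrite inE.
by rewrite Dsum_anf cI.
Qed.

Lemma J_connected n (J : {set {set 'I_n}}) (rel0 : rel 'I_n) :
  (forall u v, rel0 u v = rel0 v u) ->
  (forall u v w, rel0 u v -> rel0 v w -> rel0 u w) ->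
  (forall I, I \in J -> {in I &, forall u v, rel0 u v}) ->
  nJ J = 1%N ->
  {in \bigcup_(I in J) I &, forall u v, rel0 u v}.
Proof.
move=> rsym rtr HJ nJ1 u v /bigcupP [Iu Hu uIu] /bigcupP [Iv Hv vIv].
apply: contraT => nuv.
pose A := [set I in J | [exists k in I, rel0 u k]].
pose B := J :\: A.
have IuA : Iu \in A by rewrite inE Hu; apply/existsP; exists u; rewrite uIu /= (HJ _ Hu).
have IvB : Iv \in B.
  rewrite inE Hv andbT inE Hv /=; apply/negP => /existsP [k /andP [kI uk]].
  by move: nuv; rewrite (rtr _ _ _ uk (HJ _ Hv _ _ kI vIv)).
have sep : forall I K, I \in A -> K \in B -> [disjoint I & K].
  move=> I K; rewrite !inE => /andP [IJ /existsP [k /andP [kI uk]]].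
  case/andP=> /negP nKA KJ; apply/pred0P => z /=; apply/negbTE/negP => /andP [zI zK].
  apply: nKA; rewrite KJ /=; apply/existsP; exists z; rewrite zK /=.
  exact: rtr uk (HJ _ IJ _ _ kI zI).
have AB : A != B.
  apply/negP => /eqP eAB; move: (IvB); rewrite in_setD => /andP [nIvA _].
  by move/negP: nIvA; apply; rewrite eAB.
have Hpart : partition [set A; B] J && blocks_separated [set A; B].
  apply/andP; split.
    apply/and3P; split.
    - rewrite /cover big_setU1 ?inE //= big_set1.
      apply/eqP/setP => z; rewrite !inE.
      by case: (z \in J); case: [exists k in z, rel0 u k].
    - have := @trivIsetU1 _ A [set B]; case.
      + by move=> K; rewrite inE => /eqP ->; apply/pred0P => z /=;
          apply/negbTE/negP => /andP [zA zB]; move: zB; rewrite inE zA.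
      + exact: trivIset1.
      + by rewrite inE eq_sym; apply/set0Pn; exists Iv.
      + by [].
    - rewrite !inE negb_or; apply/andP; split; rewrite eq_sym; apply/set0Pn.
        by exists Iu.
      by exists Iv.
  apply/forallP => B1; apply/implyP => HB1; apply/forallP => B2; apply/implyP => HB2.
  apply/implyP => nB12.
  apply/forallP => I; apply/implyP => IB1; apply/forallP => K; apply/implyP => KB2.
  move: HB1 HB2; rewrite !inE => /orP [] /eqP eB1 /orP [] /eqP eB2;
    subst B1 B2; rewrite ?eqxx // in nB12.
    exact: sep.
  by rewrite disjoint_sym; exact: sep.
have := @leq_bigmax_cond _ (fun P : {set {set {set 'I_n}}} => partition P J && blocks_separated P) (fun P : {set {set {set 'I_n}}} => #|P|) [set A; B] Hpart.
by rewrite -/(nJ J) nJ1 cards2 AB.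
Qed.

Lemma lower (R : realType) n (c : {set 'I_n} -> bool) (C : {set 'I_n * 'I_n}) :
  nJ (Jfam c) = 1%N -> simulates C (fc_box R (anf c)) ->
  (#|\bigcup_(I in Jfam c) I| - 1 <= #|C|)%N.
Proof.
move=> nJ1 /sim_support [s [Himp Hs]].
have csym := sym_connect_sym (ucr_sym C).
have Hc := @J_connected n (Jfam c) (connect (ucr C))
  (fun u v => csym u v) (fun u v w => @connect_trans _ (ucr C) v u w).
have HR : forall j i, reaches C j i -> connect (ucr C) j i.
  move=> j i; apply: connect_sub => a b ab; apply: connect1.
  by rewrite /ucr ab.
have HJ : forall I, I \in Jfam c -> {in I &, forall u v, connect (ucr C) u v}.
  move=> I; rewrite inE => /andP [cI _] u v uI vI.
  have [i /subsetP Hi] := mono_in_reach Himp Hs cI.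
  have := Hi u uI; have := Hi v vI; rewrite !inE => /HR vi /HR ui.
  by apply: connect_trans ui _; rewrite csym.
have := card_conn_bound (Hc HJ nJ1).
by rewrite leq_subLR add1n.
Qed.


Lemma sim_family (R : realType) n (C : {set 'I_n * 'I_n}) (g : bits n -> bool)
  (strat : bits n -> strategy n) :
  (0 < n)%N ->
  (forall t, implementable C (strat t)) ->
  (forall x (a : bits n), #|[set t | [forall i, strat t i x == a i]]| =
       if \big[addb/false]_(i < n) a i == g x then 2%N else 0%N) ->
  simulates C (fc_box R g).
Proof.
move=> n0 Himp Hcnt.
pose k : R := (2 ^+ n)^-1.
have k2 : (2 ^+ n : R) != 0 by rewrite expf_neq0 // pnatr_eq0.
exists (fun s => \sum_(t | strat t == s) k); split; [|split; [|split]].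
- by move=> s; apply: sumr_ge0 => t _; rewrite invr_ge0 exprn_ge0.
- rewrite -(partition_big (P := predT) strat predT) //=.
  rewrite sumr_const card_ffun card_bool card_ord.
  by rewrite -mulr_natl natrX mulfV.
- move=> s; case: (pickP (fun t => strat t == s)) => [t /eqP <- _|H0].
    exact: Himp.
  by rewrite big_pred0 ?eqxx.
move=> a x.
transitivity (\sum_s \sum_(t | strat t == s)
   k * (if [forall i, strat t i x == a i] then 1 else 0)).
  by apply: eq_bigr => s _; rewrite mulr_suml; apply: eq_bigr => t /eqP ->.
rewrite -(partition_big (P := predT) strat predT
   (F := fun t => k * (if [forall i, strat t i x == a i] then 1 else 0))) //=.
rewrite -mulr_sumr -big_mkcond /= sumr_const.
have -> : #|[pred t | [forall i, strat t i x == a i]]| =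
          #|[set t | [forall i, strat t i x == a i]]|.
  by apply: eq_card => t; rewrite inE.
rewrite Hcnt /fc_box xorbE.
case: eqP => _; last by rewrite mulr0n mulr0.
rewrite /k; case: n n0 k2 {k Himp Hcnt strat C a x g} => // m _ k2.
rewrite exprS invfM /= mulrAC mulVf ?mul1r //.
by rewrite pnatr_eq0.
Qed.


Section Constr.
Variables (n : nat) (c : {set 'I_n} -> bool) (r : 'I_n) (V : {set 'I_n}).
Hypothesis rV : r \in V.
Hypothesis HV : forall K, c K -> ~~ (K \subset V) -> exists i, K = [set i].

Definition Lf (i : 'I_n) (x : bits n) : bool := [&& i \notin V, c [set i] & x i].
Definition Gf (x : bits n) : bool :=
  \big[addb/false]_(K | c K && (K \subset V)) mono K x.
Definition strat (t : bits n) : strategy n :=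
  [ffun i => [ffun x => addb (if i == r then addb (\big[addb/false]_(j | j != r) t j) (Gf x)
                        else t i) (Lf i x)]].

Lemma anf_split x : anf c x = addb (Gf x) (\big[addb/false]_i Lf i x).
Proof.
rewrite anfE (bigID (fun K : {set 'I_n} => K \subset V)) /=; congr addb.
rewrite (reindex_onto (fun i : 'I_n => [set i]) (fun K => odflt r [pick i in K])) /=.
  rewrite [RHS](bigID (fun i => (i \notin V) && c [set i])) /=.
  rewrite [X in addb _ X]big1 ?addbF; last first.
    by move=> i /negbTE; rewrite /Lf => H; apply/negbTE; rewrite andbA H.
  apply: eq_big => i.
    rewrite sub1set; case: pickP => [j|/(_ i)]; last by rewrite inE eqxx.
    rewrite inE => /eqP ->; rewrite eqxx andbT andbC.
    by case: (i \in V); case: (c [set i]).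
  case/andP=> /andP [ci]; rewrite sub1set => iV _; rewrite /Lf iV ci /= /mono.
  apply/forallP/idP => [/(_ i)|xi j]; first by rewrite inE eqxx.
  by rewrite inE; apply/implyP => /eqP ->.
move=> K /andP [cK nKV]; have [i ->] := HV cK nKV.
case: pickP => [j|/(_ i)]; last by rewrite inE eqxx.
by rewrite inE => /eqP ->.
Qed.

Lemma strat_par t x : \big[addb/false]_(i < n) strat t i x = anf c x.
Proof.
rewrite anf_split (bigD1 r) //= !ffunE eqxx.
have Lr : Lf r x = false by rewrite /Lf rV.
rewrite Lr addbF.
have -> : \big[addb/false]_(i | i != r) strat t i x =
          addb (\big[addb/false]_(j | j != r) t j) (\big[addb/false]_(i | i != r) Lf i x).
  rewrite -big_split /=; apply: eq_bigr => i ir.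
  by rewrite !ffunE (negbTE ir).
rewrite [\big[addb/false]_i Lf i x](bigD1 r) //= Lr /=.
set T := \big[addb/false]_(j | j != r) t j.
set L := \big[addb/false]_(i | i != r) Lf i x.
by case: T; case: (Gf x); case: L.
Qed.

Lemma strat_count x (a : bits n) :
  #|[set t | [forall i, strat t i x == a i]]| =
    if \big[addb/false]_(i < n) a i == anf c x then 2%N else 0%N.
Proof.
case: eqP => Hpa; last first.
  apply/eqP; rewrite cards_eq0; apply/eqP/setP => t; rewrite !inE.
  apply/negbTE/negP => /forallP Ht; apply: Hpa; rewrite -(strat_par t x).
  by apply: eq_bigr => i _; rewrite (eqP (Ht i)).
pose ff (b : bool) : bits n := [ffun i => if i == r then b else addb (a i) (Lf i x)].
have ffinj : injective ff.
  by move=> b1 b2 /ffunP /(_ r); rewrite !ffunE eqxx.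
have -> : [set t | [forall i, strat t i x == a i]] = [set ff b | b in [set: bool]].
  apply/setP => t; rewrite inE; apply/forallP/imsetP.
    move=> Ht; exists (t r); first by rewrite inE.
    apply/ffunP => i; rewrite ffunE; case: eqP => [->|/eqP ir] //.
    have := Ht i; rewrite !ffunE (negbTE ir) => /eqP <-.
    by case: (t i); case: (Lf i x).
  case=> b _ ->{t} i.
  case: (eqVneq i r) => [->{i}|ir]; last first.
    by rewrite !ffunE (negbTE ir); case: (a i); case: (Lf i x).
  have Hp := strat_par (ff b) x; rewrite -Hpa in Hp.
  move: Hp; rewrite (bigD1 r) //= [X in _ = X](bigD1 r) //=.
  have -> : \big[addb/false]_(i | i != r) strat (ff b) i x =
            \big[addb/false]_(i | i != r) a i.
    apply: eq_bigr => i ir.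
    by rewrite !ffunE (negbTE ir); case: (a i); case: (Lf i x).
  set S := \big[addb/false]_(i | i != r) a i.
  by case: (strat (ff b) r x); case: (a r); case: S.
by rewrite card_imset // cardsT card_bool.
Qed.

Lemma strat_impl (C : {set 'I_n * 'I_n}) t :
  (forall j, j \in V -> reaches C j r) -> implementable C (strat t).
Proof.
move=> HC i x y Hxy; rewrite !ffunE.
have HL : Lf i x = Lf i y by rewrite /Lf Hxy // /reaches connect0.
rewrite HL; case: eqP => // ei; subst i; congr (addb (addb _ _) _).
apply: eq_bigr => K /andP [_ /subsetP KV]; apply: eq_forallb => k.
by case: (boolP (k \in K)) => //= kK; rewrite Hxy // HC // KV.
Qed.
End Constr.


Theorem theorem2 (R : realType) (n : nat) (c : {set 'I_n} -> bool) :
  (2 <= n)%N ->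
  nJ (Jfam c) = 1%N ->
  N_scratch_comm_eq (fc_box R (anf c))
    (#|\bigcup_(I in Jfam c) I| - 1)%N.
Proof.
move=> n2 nJ1; split; last by move=> C _; exact: lower.
have n0 : (0 < n)%N by apply: leq_trans n2.
set U := \bigcup_(I in Jfam c) I.
have [r HrU] : exists r : 'I_n, (U != set0) ==> (r \in U).
  case: (eqVneq U set0) => [U0|/set0Pn [j jU]].
    by exists (Ordinal n0); rewrite U0.
  by exists j; rewrite jU implybT.
pose V := r |: U.
pose C := [set (u, r) | u in U :\ r].
exists C; split; [|split].
- move=> p /imsetP [u]; rewrite in_setD1 => /andP [ur _] -> /=; exact: ur.
- rewrite card_imset; last by move=> u v [].
  case: (eqVneq U set0) => [->|Un0]; first by rewrite set0D cards0.
  by rewrite (cardsD1 r U) (implyP HrU Un0) add1n subn1.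
have rV : r \in V by rewrite setU11.
have HV : forall K, c K -> ~~ (K \subset V) -> exists i, K = [set i].
  move=> K cK nKV; apply/cards1P.
  case: (ltngtP #|K| 1) => // HK.
    move: HK; rewrite ltnS leqn0 cards_eq0 => /eqP K0.
    by move: nKV; rewrite K0 sub0set.
  move: nKV; apply: contraR => _.
  apply: subset_trans (subsetUr _ _).
  by apply: bigcup_sup; rewrite inE cK HK.
apply: (@sim_family R n C (anf c) (strat c r V) n0).
  move=> t; apply: strat_impl => j; rewrite in_setU1 => /orP [/eqP ->|jU].
    exact: connect0.
  case: (eqVneq j r) => [->|jr]; first exact: connect0.
  by apply: connect1; apply/imsetP; exists j; rewrite // in_setD1 jr jU.
by move=> x a; apply: strat_count.
Qed.
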